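(* For any $\sigma$-structure $\mathbf D$, the family $\mathcal H_{\mathbf D}=\{\mathbf A\in\mathbb F:\mathbf A\to\mathbf D\}$ is regular.
   Context: Fix a type $\sigma$ (finite set of relation symbols with arities); $\sigma$-structures are finite sets with an $r$-ary relation per symbol of arity $r$; $\mathbf A\to\mathbf D$ means there is a relation-preserving map $V(\mathbf A)\to V(\mathbf D)$. $\mathrm{Inc}(\mathbf A)$ is the bipartite multigraph with parts $V(\mathbf A)$ and the blocks $(R,(x_1,\dots,x_r))$, $(x_1,\dots,x_r)\in R(\mathbf A)$, with one edge joining $x_i$ to the block for each $i$; $\mathbf A$ is a $\sigma$-forest if $\mathrm{Inc}(\mathbf A)$ has no cycles or parallel edges. $\mathbb F$ is the set of isomorphism classes of $\sigma$-forests, $\mathbb F_{\mathrm r}$ that of rooted $\sigma$-forests. $(\mathbf A,a)+(\mathbf B,b)$: disjoint union with $a,b$ identified as new root; $[(\mathbf A,a)]$ forgets the root. $\mathcal O\subseteq\mathbb F$ is regular if there are only finitely many distinct sets $\mathcal O-(\mathbf A,a)=\{(\mathbf B,b)\in\mathbb F_{\mathrm r}:[(\mathbf A,a)+(\mathbf B,b)]\in\mathcal O\}$, $(\mathbf A,a)\in\mathbb F_{\mathrm r}$. *)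

(* Defs.v *)
From HB Require Import structures.
From mathcomp Require Import all_boot.
Set Implicit Arguments. Unset Strict Implicit. Unset Printing Implicit Defensive.

Section Structures.
Variables (S : finType) (ar : S -> nat).

Record struct := Struct {
  V : finType;
  rel : forall R : S, (ar R).-tuple V -> bool
}.
Arguments rel : clear implicits.
Arguments V : clear implicits.

Definition hom (A D : struct) : Prop :=
  exists h : V A -> V D,
    forall (R : S) (t : (ar R).-tuple (V A)), rel A R t -> rel D R (map_tuple h t).

Definition blockT (A : struct) := {R : S & (ar R).-tuple (V A)}.
Definition is_block (A : struct) (x : blockT A) : bool := rel A (tag x) (tagged x).

(* Inc(A) has no parallel edges: no block contains a vertex at two positions. *)
Definition no_parallel (A : struct) : Prop :=
  forall (R : S) (t : (ar R).-tuple (V A)), rel A R t -> uniq t.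

(* Inc(A) has a cycle: v_0, B_0, v_1, B_1, ..., v_{k-1}, B_{k-1}, (back to v_0),
   k >= 2, with pairwise distinct vertices v_i, pairwise distinct blocks B_i,
   and v_i, v_{i+1 mod k} both incident to B_i. *)
Definition has_cycle (A : struct) : Prop :=
  exists (k : nat) (vs : 'I_k.+2 -> V A) (bs : 'I_k.+2 -> blockT A),
    [/\ injective vs, injective bs &
        forall i : 'I_k.+2,
          [/\ is_block (bs i), vs i \in (tagged (bs i) : seq _)
            & vs (ordS i) \in (tagged (bs i) : seq _)]].

Definition forest (A : struct) : Prop := no_parallel A /\ ~ has_cycle A.

(* (A,a) + (B,b): disjoint union of A and B with a and b identified (the new
   root is the image of a).  Vertex set: V(A) + (V(B) \ {b}). *)
Definition glue_V (A : struct) (a : V A) (B : struct) (b : V B) : finType :=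
  (V A + {v : V B | v != b})%type.

Definition glue_inB (A : struct) (a : V A) (B : struct) (b : V B)
  (v : V B) : glue_V a b :=
  match insub v with Some w => inr w | None => inl a end.

Definition glue (A : struct) (a : V A) (B : struct) (b : V B) : struct :=
  @Struct (glue_V a b) (fun R t =>
    [exists tA : (ar R).-tuple (V A), (t == map_tuple inl tA) && rel A R tA] ||
    [exists tB : (ar R).-tuple (V B),
        (t == map_tuple (@glue_inB A a B b) tB) && rel B R tB]).

Definition same_residual (O : struct -> Prop)
  (A : struct) (a : V A) (A' : struct) (a' : V A') : Prop :=
  forall (B : struct) (b : V B), forest B -> (O (glue a b) <-> O (glue a' b)).

(* O is regular: the residuals O - (A,a), (A,a) ranging over rooted
   sigma-forests, take only finitely many distinct values, i.e. there is a
   finite list of rooted forests whose residuals exhaust all residuals. *)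
Definition regular (O : struct -> Prop) : Prop :=
  exists (n : nat) (reps : 'I_n -> {A : struct & V A}),
    (forall i, forest (projT1 (reps i))) /\
    forall (A : struct) (a : V A), forest A ->
      exists i, same_residual O a (projT2 (reps i)).

Definition H_D (D : struct) (A : struct) : Prop := forest A /\ hom A D.

End Structures.

(* Main.v *)
Require Import Defs.
From mathcomp Require Import all_boot.
From Stdlib Require Import ClassicalEpsilon.
From mathcomp Require Import zify.
Set Implicit Arguments. Unset Strict Implicit. Unset Printing Implicit Defensive.

Section G.
Variables (S : finType) (ar : S -> nat).
Notation srel X R t := (@Defs.rel S ar X R t).
Variables (D A B : struct ar) (a : V A) (b : V B).

Lemma glue_inB_b : glue_inB a b b = inl a.
Proof. by rewrite /glue_inB insubF // eqxx. Qed.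

Lemma glue_inB_inj : injective (glue_inB a b).
Proof.
move=> x y; rewrite /glue_inB.
case: insubP => [w nx ex|nx]; case: insubP => [w' ny ey|ny] //=.
- by move=> [] e; rewrite -ex -ey e.
- by move: nx ny; rewrite !negbK => /eqP -> /eqP ->.
Qed.

Definition homw (X : struct ar) (x : V X) (d : V D) : Prop :=
  exists h : V X -> V D, (forall R t, srel X R t -> srel D R (map_tuple h t)) /\ h x = d.

Lemma glue_hom : hom (glue a b) D <-> exists d, homw a d /\ homw b d.
Proof.
split.
- move=> [h hh]; exists (h (inl a)); split.
  + exists (fun x => h (inl x)); split => // R t rt.
    have := hh R (map_tuple inl t).
    rewrite /= => /(_ _)/=.
    have -> : map_tuple h (map_tuple inl t) = map_tuple (fun x => h (inl x)) t.
      by apply: val_inj; rewrite /= -map_comp.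
    apply; apply/orP; left; apply/existsP; exists t; by rewrite eqxx rt.
  + exists (fun x => h (glue_inB a b x)); split; last by rewrite glue_inB_b.
    move=> R t rt.
    have := hh R (map_tuple (glue_inB a b) t).
    have -> : map_tuple h (map_tuple (glue_inB a b) t) = map_tuple (fun x => h (glue_inB a b x)) t.
      by apply: val_inj; rewrite /= -map_comp.
    apply; apply/orP; right; apply/existsP; exists t; by rewrite eqxx rt.
- move=> [d [[hA [hA1 hA2]] [hB [hB1 hB2]]]].
  pose h (x : glue_V a b) : V D := match x with inl y => hA y | inr w => hB (val w) end.
  exists h => R t /orP [/existsP [tA /andP [/eqP -> r]]|/existsP [tB /andP [/eqP -> r]]].
  + have -> : map_tuple h (map_tuple inl tA) = map_tuple hA tA.
      by apply: val_inj; rewrite /= -map_comp.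
    exact: hA1.
  + have -> : map_tuple h (map_tuple (glue_inB a b) tB) = map_tuple hB tB.
      apply: val_inj; rewrite /= -map_comp; apply: eq_map => v /=.
      rewrite /glue_inB; case: insubP => [w _ <-|] //=; rewrite negbK => /eqP ->.
      by rewrite hA2 hB2.
    exact: hB1.
Qed.

Notation G := (glue a b).
Definition isAb (x : blockT G) : bool :=
  [exists tA : (ar (tag x)).-tuple (V A), (tagged x == map_tuple inl tA) && srel A (tag x) tA].
Definition isBb (x : blockT G) : bool :=
  [exists tB : (ar (tag x)).-tuple (V B), (tagged x == map_tuple (glue_inB a b) tB) && srel B (tag x) tB].

Lemma is_blockE x : is_block x = isAb x || isBb x.
Proof. by []. Qed.

Lemma memAB v x y : isAb x -> isBb y -> v \in (tagged x : seq _) -> v \in (tagged y : seq _) -> v = inl a.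
Proof.
move=> /existsP [tA /andP [/eqP ex _]] /existsP [tB /andP [/eqP ey _]].
rewrite ex ey /= => /mapP [u _ ->] /mapP [w _].
by rewrite /glue_inB; case: insubP.
Qed.

Lemma glue_np : no_parallel A -> no_parallel B -> no_parallel G.
Proof.
move=> nA nB R t /orP [/existsP [tA /andP [/eqP -> r]]|/existsP [tB /andP [/eqP -> r]]] /=.
- by rewrite map_inj_uniq ?nA // => x y [].
- by rewrite map_inj_uniq ?nB //; apply: glue_inB_inj.
Qed.
End G.

Section Lift.
Variables (S : finType) (ar : S -> nat).
Notation srel X R t := (@Defs.rel S ar X R t).

Definition Fm (X Y : struct ar) (e : V X -> V Y) (x : blockT X) : blockT Y :=
  existT _ (tag x) (map_tuple e (tagged x)).

Lemma lift_cycle (X Y : struct ar) (e : V X -> V Y) (einj : injective e) k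
  (vs : 'I_k.+2 -> V Y) (bs : 'I_k.+2 -> blockT Y)
  (vs' : 'I_k.+2 -> V X) (bs' : 'I_k.+2 -> blockT X) :
  injective vs -> injective bs ->
  (forall i : 'I_k.+2, [/\ is_block (bs i), vs i \in (tagged (bs i) : seq _)
            & vs (ordS i) \in (tagged (bs i) : seq _)]) ->
  (forall i, vs i = e (vs' i)) -> (forall i, bs i = Fm e (bs' i)) ->
  (forall i, is_block (bs' i)) -> has_cycle X.
Proof.
move=> vi bi hb ev eb ib; exists k, vs', bs'; split.
- by move=> i j eij; apply: vi; rewrite !ev eij.
- by move=> i j eij; apply: bi; rewrite !eb eij.
- move=> i; have [_] := hb i; rewrite eb !ev /= !(mem_map einj) => h1 h2.
  by split.
Qed.
End Lift.

Lemma iter_ordS n (i : 'I_n) m : val (iter m (@ordS n) i) = (i + m) %% n.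
Proof.
elim: m => [|m IH] /=; first by rewrite addn0 modn_small.
by rewrite IH -addn1 modnDml addn1 addnS.
Qed.

Lemma trans_exists n (q : pred 'I_n) i0 j0 : q i0 -> ~~ q j0 -> exists i, q i && ~~ q (ordS i).
Proof.
move=> qi qj; case: (boolP [exists i, q i && ~~ q (ordS i)]) => [/existsP //|].
rewrite negb_exists => /forallP H.
have Hq m : q (iter m (@ordS n) i0).
  elim: m => //= m IH; have := H (iter m (@ordS n) i0); by rewrite IH /= negbK.
have ej : iter (j0 + n - i0) (@ordS n) i0 = j0.
  apply: val_inj; rewrite iter_ordS.
  have hi := ltn_ord i0; have hj := ltn_ord j0.
  have -> : i0 + (j0 + n - i0) = j0 + n by lia.
  by rewrite modnDr modn_small.
by move: (Hq (j0 + n - i0)); rewrite ej (negbTE qj).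
Qed.

Section NC.
Variables (S : finType) (ar : S -> nat).
Notation srel X R t := (@Defs.rel S ar X R t).
Variables (A B : struct ar) (a : V A) (b : V B).

Definition unB (x : glue_V a b) : V B := if x is inr w then val w else b.
Lemma unBK : cancel (glue_inB a b) unB.
Proof. by move=> x; rewrite /glue_inB; case: insubP => [w _ <-|] //; rewrite negbK => /eqP ->. Qed.
Definition unl (x : glue_V a b) : V A := if x is inl y then y else a.

Lemma glue_nc : ~ has_cycle A -> ~ has_cycle B -> ~ has_cycle (glue a b).
Proof.
move=> nA nB [k [vs [bs [vi bi hb]]]].
have isB (x : blockT (glue a b)) : is_block x -> ~~ isAb x -> isBb x by rewrite is_blockE => /orP [->|].
case: (boolP [forall i, isAb (bs i)]) => [/forallP allA|nall].
  apply: nA; refine (@lift_cycle S ar A (glue a b) inl _ k vs bs (fun i => unl (vs i)) (fun i => @Fm S ar (glue a b) A unl (bs i)) vi bi hb _ _ _).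
  - by move=> x y [].
  - move=> i; have [_ h _] := hb i; move: (allA i) h => /existsP [tA /andP [/eqP -> _]] /mapP [u _ ->] //.
  - move=> i; move: (allA i); case: (bs i) => R t /existsP [tA /andP [/eqP e _]]; rewrite /= in e; rewrite e.
    rewrite /Fm /=; congr existT; apply: val_inj => /=; rewrite -!map_comp; exact: eq_map.
  - move=> i; move: (allA i); rewrite /is_block; case: (bs i) => R t /existsP [tA /andP [/eqP e r]]; rewrite /= in e; rewrite e.
    rewrite /=; set X := map_tuple _ _.
    have -> // : X = tA.
    by apply: val_inj; rewrite /= -map_comp; apply: map_id_in.
move: nall; rewrite negb_forall => /existsP [j0 nj0].
case: (boolP [forall i, ~~ isAb (bs i)]) => [/forallP allB|].
  have bB i : isBb (bs i) by have [h _ _] := hb i; exact: isB _ h (allB i).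
  apply: nB; refine (@lift_cycle S ar B (glue a b) (glue_inB a b) _ k vs bs (fun i => unB (vs i)) (fun i => @Fm S ar (glue a b) B unB (bs i)) vi bi hb _ _ _).
  - exact: glue_inB_inj.
  - move=> i; have [_ h _] := hb i; move: (bB i) h => /existsP [tB /andP [/eqP -> _]] /mapP [u _ ->].
    by rewrite unBK.
  - move=> i; move: (bB i); case: (bs i) => R t /existsP [tB /andP [/eqP e _]]; rewrite /= in e; rewrite e.
    rewrite /Fm /=; congr existT; apply: val_inj => /=; rewrite -!map_comp; apply: eq_map => x /=.
    by rewrite unBK.
  - move=> i; move: (bB i); rewrite /is_block; case: (bs i) => R t /existsP [tB /andP [/eqP e r]]; rewrite /= in e; rewrite e.
    rewrite /=; set X := map_tuple _ _.
    have -> // : X = tB.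
    by apply: val_inj; rewrite /= -map_comp; apply: map_id_in => x _ /=; rewrite unBK.
rewrite negb_forall => /existsP [i0]; rewrite negbK => ai0.
have [i /andP [ai nai]] := trans_exists (q := fun i => isAb (bs i)) ai0 nj0.
have nn : ~~ ~~ isAb (bs i0) by rewrite negbK.
have [j /andP [nj aj]] := trans_exists (q := fun i => ~~ isAb (bs i)) nj0 nn.
rewrite negbK in aj.
have e1 : vs (ordS i) = inl a.
  have [_ _ h1] := hb i; have [h2 h3 _] := hb (ordS i).
  exact: memAB ai (isB _ h2 nai) h1 h3.
have e2 : vs (ordS j) = inl a.
  have [h2 _ h1] := hb j; have [_ h3 _] := hb (ordS j).
  exact: memAB aj (isB _ h2 nj) h3 h1.
have eij : i = j by apply: ordS_inj; apply: vi; rewrite e1 e2.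
by move: ai nj; rewrite eij => ->.
Qed.
End NC.

Section Main.
Variables (S : finType) (ar : S -> nat) (D : struct ar).

Definition pb (P : Prop) : bool := if excluded_middle_informative P then true else false.
Lemma pbP P : pb P <-> P.
Proof. by rewrite /pb; case: excluded_middle_informative. Qed.

Definition Tset (X : struct ar) (x : V X) : {set V D} := [set d | pb (@homw S ar D X x d)].

Definition RF := {A : struct ar & V A}.
Definition dflt : RF := existT _ (@Struct S ar unit (fun _ _ => false)) tt.

Lemma dflt_forest : forest (projT1 dflt).
Proof. split; first by []. by move=> [k [vs [bs [_ _ h]]]]; have [] := h ord0. Qed.

Definition rep (X : {set V D}) : RF :=
  match excluded_middle_informative (exists p : RF, forest (projT1 p) /\ Tset (projT2 p) = X) with
  | left e => proj1_sig (constructive_indefinite_description _ e)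
  | right _ => dflt end.

Lemma rep_forest X : forest (projT1 (rep X)).
Proof.
rewrite /rep; case: excluded_middle_informative => [e|_]; last exact: dflt_forest.
by case: constructive_indefinite_description => p [].
Qed.

Lemma rep_T (A : struct ar) (a : V A) : forest A -> Tset (projT2 (rep (Tset a))) = Tset a.
Proof.
move=> fA; rewrite /rep; case: excluded_middle_informative => [e|n].
  by case: constructive_indefinite_description => p [].
by exfalso; apply: n; exists (existT _ A a).
Qed.

Lemma memT (X : struct ar) (x : V X) d : d \in Tset x <-> homw x d.
Proof. by rewrite inE pbP. Qed.

Lemma glue_forest (A B : struct ar) (a : V A) (b : V B) : forest A -> forest B -> forest (glue a b).
Proof. by move=> [pA cA] [pB cB]; split; [apply: glue_np | apply: glue_nc]. Qed.

Lemma HD_glue (A B : struct ar) (a : V A) (b : V B) : forest A -> forest B ->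
  (H_D D (glue a b) <-> exists d, d \in Tset a /\ d \in Tset b).
Proof.
move=> fA fB; rewrite /H_D glue_hom; split.
- by move=> [_ [d [h1 h2]]]; exists d; rewrite !memT.
- move=> [d [h1 h2]]; split; first exact: glue_forest.
  by exists d; rewrite -!memT.
Qed.
End Main.

Theorem lemma3p3 (S : finType) (ar : S -> nat) (D : struct ar) :
  regular (@H_D S ar D).
Proof.
exists #|{set V D}|, (fun i => @rep S ar D (enum_val i)); split.
  by move=> i; apply: rep_forest.
move=> A a fA; exists (enum_rank (Tset D a)); rewrite enum_rankK => B b fB.
have fA' := rep_forest (Tset D a).
have eT := rep_T D a fA.
rewrite (HD_glue D a b fA fB) (HD_glue D (projT2 (rep (Tset D a))) b fA' fB) eT.
by [].
Qed.
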